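(* Let $n\ge 3$ and let $f:[n]\to\mathbb{R}$ be a function having at most $2$ distinct discrete derivatives. Consider the following deterministic adaptive procedure: (1) Query $f(1),f(2),f(n-1),f(n)$. (2) Define the affine functions $f_1(x)=f(1)+(x-1)\bigl(f(2)-f(1)\bigr)$ and $f_2(x)=f(n)-(n-x)\bigl(f(n)-f(n-1)\bigr)$. (3) If there is no $j\in[n]$ with $f_1(j)=f_2(j)$, reject. Otherwise pick any such $j\in[n]$ and query $f(j)$. (4) Reject if the restriction of $f$ to $\{1,2,j,n-1,n\}$ is not convex or if $f(j)\neq f_1(j)$; otherwise accept. Then this procedure makes at most $5$ queries, accepts every convex such $f$, and rejects every such $f$ that is not convex. In particular, there is a deterministic algorithm that, given oracle access to any $f:[n]\to\mathbb{R}$ with at most $2$ distinct discrete derivatives, decides exactly whether $f$ is convex using at most $5$ adaptive queries.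
   Context: For $f:[n]\to\mathbb{R}$ (where $[n]=\{1,\dots,n\}$), the discrete derivative at $i\in[n-1]$ is $\Delta_f(i)=f(i+1)-f(i)$; the number of distinct discrete derivatives of $f$ is the cardinality of $\{\Delta_f(i): i\in[n-1]\}$. For a finite set $B\subseteq\mathbb{R}$, a function $g:B\to\mathbb{R}$ is convex if $\frac{g(y)-g(x)}{y-x}\le\frac{g(z)-g(y)}{z-y}$ for all $x<y<z$ in $B$; for $B=[n]$ this is equivalent to $\Delta_g$ being non-decreasing. ''Adaptive'' means later query points may depend on answers to earlier queries. *)

(* Defs.v *)
From mathcomp Require Import all_boot all_order all_algebra.
Set Implicit Arguments. Unset Strict Implicit. Unset Printing Implicit Defensive.
Import Order.TTheory GRing.Theory Num.Theory.
Local Open Scope ring_scope.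

Section Defs.
Variable R : realFieldType.

(* A function f : [n] -> R is represented by f : nat -> R, only its values
   on 1..n matter. *)

Definition dderiv (f : nat -> R) (i : nat) : R := f i.+1 - f i.

Definition num_dderivs (n : nat) (f : nat -> R) : nat :=
  size (undup [seq dderiv f i | i <- iota 1 n.-1]).

Definition convex_on (B : seq nat) (f : nat -> R) : Prop :=
  forall x y z : nat, x \in B -> y \in B -> z \in B -> (x < y)%N -> (y < z)%N ->
    (f y - f x) / (y%:R - x%:R) <= (f z - f y) / (z%:R - y%:R).

Definition convex (n : nat) (f : nat -> R) : Prop := convex_on (iota 1 n) f.

Definition f1 (n : nat) (f : nat -> R) (x : nat) : R :=
  f 1%N + (x%:R - 1) * (f 2%N - f 1%N).
Definition f2 (n : nat) (f : nat -> R) (x : nat) : R :=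
  f n - (n%:R - x%:R) * (f n - f n.-1).

Definition candidates (n : nat) (f : nat -> R) : seq nat :=
  [seq j <- iota 1 n | f1 n f j == f2 n f j].

(* A selection rule "pick any such j": any function choosing an element of a
   nonempty list of candidates. *)
Definition valid_pick (pick : seq nat -> nat) : Prop :=
  forall s : seq nat, s != [::] -> pick s \in s.

Definition queries (n : nat) (pick : seq nat -> nat) (f : nat -> R) : seq nat :=
  [:: 1%N; 2%N; n.-1; n] ++
  (if candidates n f is [::] then [::] else [:: pick (candidates n f)]).

Definition proc (n : nat) (pick : seq nat -> nat) (f : nat -> R) : Prop :=
  ~~ nilp (candidates n f) /\
  (let j := pick (candidates n f) in
   convex_on [:: 1%N; 2%N; j; n.-1; n] f /\ f j = f1 n f j).

End Defs.

(* Main.v *)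
Require Import Defs.
From mathcomp Require Import all_boot all_order all_algebra.
From mathcomp Require Import zify ring lra.
Import Order.TTheory GRing.Theory Num.Theory.
Local Open Scope ring_scope.

Section H.
Variable R : realFieldType.
Variable f : nat -> R.
Local Notation D := (dderiv f).

Lemma tele m p : (m <= p)%N -> \sum_(m <= i < p) D i = f p - f m.
Proof. move=> h; exact: telescope_sumr. Qed.

Lemma sum_le m p c : (m <= p)%N -> (forall i, (m <= i < p)%N -> D i <= c) ->
  f p - f m <= (p%:R - m%:R) * c.
Proof.
move=> h H; rewrite -tele // -natrB // mulr_natl -sumr_const_nat.
by apply: ler_sum_nat.
Qed.

Lemma sum_ge m p c : (m <= p)%N -> (forall i, (m <= i < p)%N -> c <= D i) ->
  (p%:R - m%:R) * c <= f p - f m.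
Proof.
move=> h H; rewrite -tele // -natrB // mulr_natl -sumr_const_nat.
by apply: ler_sum_nat.
Qed.

Lemma sum_eq m p c : (m <= p)%N -> (forall i, (m <= i < p)%N -> D i = c) ->
  f p - f m = (p%:R - m%:R) * c.
Proof.
move=> h H; apply/eqP; rewrite eq_le sum_le ?sum_ge // => i /H ->//.
Qed.

Lemma zero_sum m p c : (m <= p)%N ->
  (forall i k, (m <= i < p)%N -> (m <= k < p)%N -> [\/ D i = c, D k = c | D i = D k]) ->
  f p - f m = (p%:R - m%:R) * c ->
  forall i, (m <= i < p)%N -> D i = c.
Proof.
move=> hmp H E i0 hi0; apply/eqP; rewrite -subr_eq0; apply/negPn/negP => hw.
set w := D i0 - c.
have S : \sum_(m <= i < p) (D i - c) * w = 0.
  rewrite -big_distrl /= sumrB sumr_const_nat tele // E -natrB // mulr_natl.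
  by rewrite subrr mul0r.
have nn : forall i, (m <= i < p)%N -> 0 <= (D i - c) * w.
  move=> i hi; case: (H i i0 hi hi0) => [->|h|->].
  - by rewrite subrr mul0r.
  - by move: hw; rewrite /w h subrr eqxx.
  - by rewrite -expr2 sqr_ge0.
move: S; rewrite (bigD1_seq i0) ?mem_index_iota ?iota_uniq //= => S.
have : 0 <= \sum_(i <- index_iota m p | i != i0) (D i - c) * w.
  rewrite big_seq_cond; apply: sumr_ge0 => i /andP[]; rewrite mem_index_iota.
  by move=> hi _; apply: nn.
have : 0 < (D i0 - c) * w by rewrite -expr2 lt_def sqrf_eq0 hw sqr_ge0.
move=> h1 h2; move: S; lra.
Qed.

Lemma mono_convex n : (forall i k, (1 <= i)%N -> (i <= k)%N -> (k < n)%N -> D i <= D k) ->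
  convex n f.
Proof.
move=> M x y z; rewrite !mem_iota => /andP[hx1 hx2] /andP[hy1 hy2] /andP[hz1 hz2] hxy hyz.
have dxy : 0 < y%:R - x%:R :> R by rewrite subr_gt0 ltr_nat.
have dyz : 0 < z%:R - y%:R :> R by rewrite subr_gt0 ltr_nat.
apply: (@le_trans _ _ (D y.-1)).
  rewrite ler_pdivrMr // mulrC; apply: sum_le; first exact: ltnW.
  move=> i /andP[h1 h2]; apply: M; lia.
apply: (@le_trans _ _ (D y)); first by apply: M; lia.
rewrite ler_pdivlMr // mulrC; apply: sum_ge; first exact: ltnW.
move=> i /andP[h1 h2]; apply: M; lia.
Qed.

Lemma convex_mono n : convex n f ->
  forall i k, (1 <= i)%N -> (i <= k)%N -> (k < n)%N -> D i <= D k.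
Proof.
move=> C i k h1 hik hk; move: hk; rewrite -(subnKC hik).
elim: (k - i)%N => [|d IH] hk; first by rewrite addn0.
have hd : (i + d < n)%N by lia.
apply: (le_trans (IH hd)).
have := C (i + d)%N (i + d).+1 (i + d).+2.
rewrite !mem_iota; move=> /(_ ltac:(lia) ltac:(lia) ltac:(lia) (ltnSn _) (ltnSn _)).
have e : forall q : nat, q.+1%:R - q%:R = 1 :> R.
  by move=> q; rewrite -natrB // subSnn.
by rewrite !e !divr1 /dderiv addnS.
Qed.

Lemma convex_on_ext B g : {in B, f =1 g} -> convex_on B f -> convex_on B g.
Proof. move=> e h x y z hx hy hz; rewrite -!e //; exact: h. Qed.

Lemma convex_on_sub B B' : {subset B' <= B} -> convex_on B f -> convex_on B' f.
Proof. move=> s h x y z hx hy hz; apply: h; exact: s. Qed.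

Lemma pigeon n : (num_dderivs n f <= 2)%N -> forall i k l,
  (1 <= i < n)%N -> (1 <= k < n)%N -> (1 <= l < n)%N ->
  [\/ D i = D k, D i = D l | D k = D l].
Proof.
move=> hn i k l hi hk hl.
case: (eqVneq (D i) (D k)) => [e|h1]; first by constructor 1.
case: (eqVneq (D i) (D l)) => [e|h2]; first by constructor 2.
case: (eqVneq (D k) (D l)) => [e|h3]; first by constructor 3.
exfalso; move: hn; rewrite /num_dderivs.
set s := [seq _ | _ <- _].
have mem : forall q, (1 <= q < n)%N -> D q \in undup s.
  move=> q hq; rewrite mem_undup; apply: map_f; rewrite mem_iota; lia.
have := @uniq_leq_size _ [:: D i; D k; D l] (undup s).
rewrite /= !inE negb_or h1 h2 h3 => /(_ isT).
have hsub : {subset [:: D i; D k; D l] <= undup s}.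
  by move=> q; rewrite !inE => /or3P[]/eqP->; apply: mem.
move=> /(_ hsub) /= h hh; have := leq_trans h hh; by [].
Qed.
End H.
Arguments pigeon {R f n}.
Arguments zero_sum {R f m p c}.
Arguments sum_eq {R f m p c}.
Arguments mono_convex {R f n}.
Arguments convex_mono {R f n}.
Arguments convex_on_ext {R f B g}.
Arguments convex_on_sub {R f B B'}.

Theorem theorem1 (R : realFieldType) (n : nat) (f : nat -> R)
  (pick : seq nat -> nat) :
  (3 <= n)%N -> (num_dderivs n f <= 2)%N -> valid_pick pick ->
  [/\ (size (queries n pick f) <= 5)%N,
      (forall g : nat -> R, {in queries n pick f, f =1 g} ->
         (proc n pick g <-> proc n pick f))
    & (proc n pick f <-> convex n f)].
Proof.
move=> hn hd hp.
have Pg := pigeon hd.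
set a := dderiv f 1.
set b := dderiv f n.-1.
have ea : f 2 - f 1 = a by [].
have eb : f n - f n.-1 = b by rewrite /b /dderiv prednK //; lia.
split.
- by rewrite /queries; case: candidates.
- move=> g e.
  have qq : forall x, x \in [:: 1%N; 2%N; n.-1; n] -> f x = g x.
    by move=> x hx; apply: e; rewrite /queries mem_cat hx.
  have ef1 : forall x, f1 n g x = f1 n f x.
    by move=> x; rewrite /f1 -!qq // !inE eqxx ?orbT.
  have ef2 : forall x, f2 n g x = f2 n f x.
    by move=> x; rewrite /f2 -!qq // !inE eqxx ?orbT.
  have ec : candidates n g = candidates n f.
    by rewrite /candidates; apply: eq_filter => x; rewrite ef1 ef2.
  rewrite /proc ec.
  case E: (candidates n f) => [|c cs] /=; first by split; case.
  set j := pick (c :: cs).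
  have hj : j \in queries n pick f by rewrite /queries E mem_cat mem_seq1 eqxx orbT.
  have eB : {in [:: 1%N; 2%N; j; n.-1; n], f =1 g}.
    move=> x; rewrite !inE => H.
    have [/eqP ->|hx] := boolP (x == j); first by apply: e.
    apply: qq; move: H; rewrite !inE (negbTE hx) /=; by [].
  have eB' : {in [:: 1%N; 2%N; j; n.-1; n], g =1 f}.
    by move=> x hx; rewrite eB.
  split; move=> [h1 [h2 h3]]; split=> //; split.
  + exact: convex_on_ext eB' h2.
  + by rewrite -ef1 -h3 (eB j) // !inE eqxx ?orbT.
  + exact: convex_on_ext eB h2.
  + by rewrite ef1 -h3 (eB j) // !inE eqxx ?orbT.
- split.
  + move=> [hne [hconv hj]].
    set j := pick (candidates n f) in hconv hj.
    have jc : j \in candidates n f.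
      by apply: hp; move: hne; case: (candidates n f).
    move: jc; rewrite mem_filter mem_iota => /andP[/eqP h12 /andP[hj1 hj2]].
    have hA : forall i, (1 <= i < j)%N -> dderiv f i = a.
      apply: (zero_sum (m := 1%N)) => //.
        move=> i k hi hk; case: (Pg i k 1%N ltac:(lia) ltac:(lia) ltac:(lia)) => h.
        * by constructor 3.
        * by constructor 1.
        * by constructor 2.
      by rewrite hj /f1 mulr1n -ea; ring.
    have hB : forall i, (j <= i < n)%N -> dderiv f i = b.
      have hjn : (j <= n)%N by lia.
      apply: (zero_sum (m := j)) => //.
        move=> i k hi hk; case: (Pg i k n.-1 ltac:(lia) ltac:(lia) ltac:(lia)) => h.
        * by constructor 3.
        * by constructor 1.
        * by constructor 2.
      by rewrite hj h12 /f2 -eb; ring.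
    have hab : a <= b.
      have [e1|ne1] := eqVneq j 1%N.
        by rewrite [a](hB 1%N) //; lia.
      have [en|nen] := eqVneq j n.
        by rewrite [b](hA n.-1) //; lia.
      have := hconv 1%N j n; rewrite !inE !eqxx ?orbT /=.
      move=> /(_ isT isT isT ltac:(lia) ltac:(lia)).
      rewrite (sum_eq (c := a) _ hA) ?(sum_eq (c := b) _ hB); try lia.
      have d1 : (j%:R - 1%:R : R) != 0.
        by rewrite subr_eq0 eqr_nat; lia.
      have d2 : (n%:R - j%:R : R) != 0.
        by rewrite subr_eq0 eqr_nat; lia.
      rewrite (mulrC (j%:R - 1%:R)) (mulrC (n%:R - j%:R)).
      by rewrite (mulfK d1) (mulfK d2).
    apply: mono_convex => i k h1 h2 h3.
    have [hi|hi] := ltnP i j.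
      rewrite (hA i) ?h1 ?hi //.
      have [hk|hk] := ltnP k j; first by rewrite (hA k) ?hk //; lia.
      by rewrite (hB k) ?hk.
    rewrite (hB i); last lia.
    by rewrite (hB k); last lia.
  + move=> C.
    have M := convex_mono C.
    have hab : a <= b by apply: M; lia.
    have [j [hj [hA hB]]] : exists j, (1 <= j <= n)%N /\
        (forall i, (1 <= i < j)%N -> dderiv f i = a) /\
        (forall i, (j <= i < n)%N -> dderiv f i = b).
      have [eab|nab] := eqVneq a b.
        exists 1%N; split; first lia.
        split=> i hi; first lia.
        apply/eqP; rewrite eq_le M ?andbT; try lia.
        by rewrite -eab; apply: M; lia.
      have ex : exists i, (1 <= i)%N && (dderiv f i == b).
        by exists n.-1; rewrite eqxx andbT; lia.
      case: (ex_minnP ex) => j /andP[hj1 /eqP hjb] jmin.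
      have hjn : (j <= n.-1)%N by apply: jmin; rewrite eqxx andbT; lia.
      exists j; split; first lia.
      split=> i hi.
        case: (Pg i 1%N n.-1 ltac:(lia) ltac:(lia) ltac:(lia)) => h //.
          have : (j <= i)%N by apply: jmin; rewrite h eqxx andbT; lia.
          lia.
        by move: nab; rewrite /a /b h eqxx.
      apply/eqP; rewrite eq_le M ?andbT; try lia.
      by rewrite -hjb; apply: M; lia.
    have hj1 : (1 <= j)%N by lia.
    have hj2 : (j <= n)%N by lia.
    have fj1 : f j = f1 n f j.
      have := sum_eq (c := a) hj1 hA; rewrite /f1 mulr1n -ea => h.
      by rewrite -h; ring.
    have fj2 : f j = f2 n f j.
      have := sum_eq (c := b) hj2 hB; rewrite /f2 -eb => h.
      by rewrite -h; ring.
    have jc : j \in candidates n f.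
      by rewrite mem_filter mem_iota -fj1 -fj2 eqxx /=; lia.
    have hne : candidates n f != [::] by move: jc; case: (candidates n f).
    have := hp _ hne; set j' := pick (candidates n f).
    rewrite mem_filter mem_iota => /andP[/eqP h12 /andP[hj'1 hj'2]].
    split; first by move: hne; case: (candidates n f).
    split.
      apply: (convex_on_sub _ C) => x; rewrite !inE mem_iota.
      case/orP=> [/eqP->|]; first lia.
      case/orP=> [/eqP->|]; first lia.
      case/orP=> [/eqP->|]; first lia.
      case/orP=> [/eqP->|/eqP->]; lia.
    have [hl|hl] := leqP j' j.
      have := sum_eq (c := a) hj'1 (fun i hi => hA i ltac:(lia)).
      rewrite /f1 mulr1n -ea => h; rewrite -h; ring.
    rewrite h12.
    have hj'n : (j' <= n)%N by lia.
    have := sum_eq (c := b) hj'n (fun i hi => hB i ltac:(lia)).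
    rewrite /f2 -eb => h; rewrite -h; ring.
Qed.
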